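(* Let $\Delta\in\mathbb F^{m\times m}$ be a connection matrix with column/row partition consisting of two sets $J_0,J_1$. Let $\tilde\Delta^{t^*+1}$ be the last matrix produced by the Revised 1-Block Incremental Sweeping Algorithm applied to $\Delta$, and let $\Delta^m$ be the last matrix produced by the Incremental Sweeping Algorithm (ISA) applied to $\Delta$. Then $\tilde\Delta^{t^*+1}=\Delta^m$, and the sets of positions marked as primary pivots by the two algorithms coincide (hence the primary pivots coincide in position and value).
   Context: Throughout, $\mathbb F$ is a field and $m\ge1$. $A_{\cdot j}$ is the $j$-th column of $A$, $A_{IJ}$ the submatrix with rows in $I$ and columns in $J$. $U^{pq}$ is the $m\times m$ matrix whose only nonzero entry is a $1$ in position $(p,q)$. Superscripts on matrices are indices, not powers. A connection matrix (over $\mathbb F$) is a matrix $\Delta\in\mathbb F^{m\times m}$ together with a partition $\{1,\dots,m\}=J_0\sqcup\cdots\sqcup J_b$ (the column/row partition; the $J_k$ need not consist of consecutive integers) such that $\Delta$ is upper triangular, $\Delta\Delta=0$, and $\Delta_{ij}=0$ unless $i<j$ and $(i,j)\in\bigcup_{k=1}^bJ_{k-1}\times J_k$. For $1\le r\le m-1$ the $r$-th diagonal is $\{(j-r,j):r<j\le m\}$. Incremental Sweeping Algorithm (ISA) applied to a connection matrix $\Delta$: set $\Delta^0=\Delta^1=\Delta$. For $r=1,\dots,m-1$ in turn: (Markup) for every position $(j-r,j)$ on the $r$-th diagonal with $\Delta^r_{j-r,j}\ne0$ such that no position in column $j$ was marked as a primary pivot at an earlier iteration: if some position $(j-r,p)$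 of row $j-r$ was marked as a primary pivot at an earlier iteration, mark $(j-r,j)$ as a change-of-basis pivot of iteration $r$; otherwise mark $(j-r,j)$ permanently as a primary pivot. (Update) Let $T^r=I-\sum \frac{\Delta^r_{j-r,j}}{\Delta^r_{j-r,p}}U^{pj}$, the sum running over all change-of-basis pivots $(j-r,j)$ of iteration $r$, where $(j-r,p)$ is the primary pivot position in row $j-r$; set $\Delta^{r+1}=(T^r)^{-1}\Delta^rT^r$. Revised 1-Block Incremental Sweeping Algorithm (for $b=1$): set $C^1=\{1,\dots,m\}$, $\tilde\Delta^1=\Delta$, $t=1$. While $\tilde\Delta^t_{\cdot C^t}\ne0$: let $i_t=\max\{i:\tilde\Delta^t_{iC^t}\ne0\}$, $j_t=\min\{j\in C^t:\tilde\Delta^t_{i_tj}\ne0\}$; mark $(i_t,j_t)$ as a primary pivot; let $\tilde T^t=I-\sum_{j\in C^t,\,j>j_t}\frac{\tilde\Delta^t_{i_tj}}{\tilde\Delta^t_{i_tj_t}}U^{j_tj}$, $\tilde\Delta^{t+1}=\tilde\Delta^t\tilde T^t$, $C^{t+1}=C^t\setminus\{j_t\}$, $t\leftarrow t+1$. Let $t^*$ be the total number of primary pivots marked. *)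

(* Defs.v *)
(* Indices 1..m of the paper are represented by 'I_m (0..m-1);
   the order is preserved, so all comparisons are unchanged. *)
From HB Require Import structures.
From mathcomp Require Import all_boot all_order all_algebra.
Set Implicit Arguments. Unset Strict Implicit. Unset Printing Implicit Defensive.
Import GRing.Theory.
Local Open Scope ring_scope.

Section Defs.
Variables (F : fieldType) (m : nat).

Definition pos := ('I_m * 'I_m)%type.

Definition is_partition2 (J0 J1 : {set 'I_m}) : Prop :=
  J0 :&: J1 = set0 /\ J0 :|: J1 = setT.

Definition connection_matrix1 (D : 'M[F]_m) (J0 J1 : {set 'I_m}) : Prop :=
  is_partition2 J0 J1 /\
  (forall i j : 'I_m, (j < i)%N -> D i j = 0) /\
  D *m D = 0 /\
  (forall i j : 'I_m, D i j != 0 -> [&& (i < j)%N, i \in J0 & j \in J1]).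

(* state: (current matrix Delta^r, set of primary pivots marked so far) *)

Definition prow (P : {set pos}) (i : 'I_m) : 'I_m :=
  odflt i [pick k | (i, k) \in P].

Definition isa_markable (r : nat) (D : 'M[F]_m) (P : {set pos}) (ij : pos) : bool :=
  [&& (val ij.2 == val ij.1 + r)%N, D ij.1 ij.2 != 0 &
      ~~ [exists k, (k, ij.2) \in P]].

Definition isa_primary r D P (ij : pos) : bool :=
  isa_markable r D P ij && ~~ [exists k, (ij.1, k) \in P].

Definition isa_cob r D P (ij : pos) : bool :=
  isa_markable r D P ij && [exists k, (ij.1, k) \in P].

Definition isa_T r (D : 'M[F]_m) (P : {set pos}) : 'M[F]_m :=
  1%:M - \sum_(ij : pos | isa_cob r D P ij)
            (D ij.1 ij.2 / D ij.1 (prow P ij.1)) *: delta_mx (prow P ij.1) ij.2.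

Definition isa_step (st : 'M[F]_m * {set pos}) (r : nat) : 'M[F]_m * {set pos} :=
  let (D, P) := st in
  let T := isa_T r D P in
  (invmx T *m D *m T, P :|: [set ij | isa_primary r D P ij]).

Definition ISA (D : 'M[F]_m) : 'M[F]_m * {set pos} :=
  foldl isa_step (D, set0) (iota 1 m.-1).

(* state: (current matrix tilde Delta^t, C^t, set of primary pivots) *)

Definition rowC (D : 'M[F]_m) (C : {set 'I_m}) (i : 'I_m) : bool :=
  [exists j in C, D i j != 0].

Definition rev_step (st : 'M[F]_m * {set 'I_m} * {set pos})
  : 'M[F]_m * {set 'I_m} * {set pos} :=
  let: (D, C, P) := st in
  match [pick i | rowC D C i && [forall i', rowC D C i' ==> (i' <= i)%N]] with
  | None => st     (* tilde Delta_{. C} = 0 : the loop has stopped *)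
  | Some it =>
    match [pick j | [&& j \in C, D it j != 0 &
             [forall j', ((j' \in C) && (D it j' != 0)) ==> (j <= j')%N]]] with
    | None => st
    | Some jt =>
      let T := 1%:M - \sum_(j in C | (jt < j)%N) (D it j / D it jt) *: delta_mx jt j in
      (D *m T, C :\ jt, P :|: [set (it, jt)])
    end
  end.

(* The loop performs at most m productive steps (C shrinks each time), so
   iterating the (stationary-when-stopped) step m times yields the final state. *)
Definition Revised1 (D : 'M[F]_m) : 'M[F]_m * {set 'I_m} * {set pos} :=
  iter m rev_step (D, setT, set0).

End Defs.

(* Main.v *)
Require Import Defs.
From HB Require Import structures.
From mathcomp Require Import all_boot all_order all_algebra.
Set Implicit Arguments. Unset Strict Implicit. Unset Printing Implicit Defensive.
Import GRing.Theory.
Local Open Scope ring_scope.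

Section Proofs.
Variables (F : fieldType) (m : nat).

Definition Char (D R : 'M[F]_m) (P : {set pos m}) : Prop :=
  [/\ forall i j, (i,j) \in P -> R i j != 0 /\ (forall i' : 'I_m, (i < i')%N -> R i' j = 0),
      forall j, (forall i, (i,j) \notin P) -> forall i, R i j = 0,
      forall i p j, (i,p) \in P -> (i,j) \in P -> p = j &
      forall j, exists a : 'I_m -> F,
        (forall i, R i j = D i j + \sum_p a p * R i p) /\
        (forall p, a p != 0 -> (p < j)%N /\ exists i0, (i0,p) \in P /\
             forall i' : 'I_m, (i0 <= i')%N -> R i' j = 0)].

Lemma char_col_uniq D R P i i' p : Char D R P -> (i,p) \in P -> (i',p) \in P -> i = i'.
Proof.
case=> Ha _ _ _ H1 H2.
have [n1 z1] := Ha _ _ H1; have [n2 z2] := Ha _ _ H2.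
case: (ltngtP i i') => [lt|lt|/val_inj //].
  by rewrite z1 ?eqxx in n2.
by rewrite z2 ?eqxx in n1.
Qed.

Lemma side D R P R' (j p : 'I_m) i :
  Char D R P -> (i,p) \in P -> (p < j)%N -> R i j != 0 ->
  (forall l : 'I_m, (i < l)%N -> R l j = R' l j) -> (forall l : 'I_m, (i <= l)%N -> R' l j = 0) -> False.
Proof.
case=> Ha Hb Hc Hd Hip Hpj Hij Hhi Hz.
have [l Hl] : exists l, (l,j) \in P.
  case: (boolP [exists l, (l,j) \in P]) => [/existsP //|/existsPn H].
  by move: Hij; rewrite (Hb j H i) eqxx.
have [nl zl] := Ha _ _ Hl.
have il : (i <= l)%N.
  rewrite leqNgt; apply/negP => li; by rewrite zl ?eqxx in Hij.
move: il; rewrite leq_eqVlt => /orP [/eqP e|lt].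
  have ei : i = l by apply: val_inj.
  subst l; have := Hc _ _ _ Hip Hl => epj; subst p; by rewrite ltnn in Hpj.
by move: nl; rewrite Hhi // Hz ?eqxx // ltnW.
Qed.

Lemma char_col D R P R' P' (j : 'I_m) :
  Char D R P -> Char D R' P' ->
  (forall p : 'I_m, (p < j)%N ->
     (forall i, R i p = R' i p) /\ (forall i, ((i,p) \in P) = ((i,p) \in P'))) ->
  forall i, R i j = R' i j.
Proof.
move=> HC HC' IH.
case: (HC) => Ha Hb Hc Hd. case: (HC') => Ha' Hb' Hc' Hd'.
have [a [Ea Ha0]] := Hd j. have [b [Eb Hb0]] := Hd' j.
pose c p := a p - b p.
have Hw : forall i, R i j - R' i j = \sum_p c p * R i p.
  move=> i; rewrite Ea Eb opprD addrACA subrr add0r -sumrB.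
  apply: eq_bigr => p _; rewrite /c mulrBl.
  case: (boolP (b p == 0)) => [/eqP ->|nz]; first by rewrite !mul0r.
  by rewrite ((IH p (Hb0 p nz).1).1 i).
pose rowof p := odflt p [pick i | (i,p) \in P].
have Hpiv : forall p, c p != 0 -> (p < j)%N /\ (rowof p, p) \in P.
  move=> p cp.
  have [pj [i0 Hi0]] : (p < j)%N /\ exists i0, (i0, p) \in P.
    case: (boolP (a p == 0)) => [/eqP ap|ap]; last first.
      by have [? [i0 [? _]]] := Ha0 p ap; split=> //; exists i0.
    have bp : b p != 0 by apply: contraNneq cp; rewrite /c ap => ->; rewrite subrr.
    have [pj [i0 [Hi0 _]]] := Hb0 p bp; split=> //; exists i0.
    by rewrite ((IH p pj).2 i0).
  split=> //; rewrite /rowof; case: pickP => [x //|/(_ i0)]; by rewrite Hi0.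
have c0 : forall p, c p = 0.
  move=> p0; apply/eqP; apply/negPn/negP => cp0.
  case: (@fintype.arg_maxnP _ p0 (fun p => c p != 0) (fun p => nat_of_ord (rowof p)) cp0) => ps cps Hmax.
  have [psj Hps] := Hpiv ps cps.
  set is_ := rowof ps in Hps Hmax.
  have Hlow : forall p, c p != 0 -> p != ps -> (rowof p < is_)%N.
    move=> p cp nps; rewrite ltn_neqAle; apply/andP; split; last exact: (Hmax p cp).
    apply: contra nps => /eqP e.
    have e' : rowof p = is_ by apply: val_inj.
    have := (Hpiv p cp).2; rewrite e' => H; by rewrite (Hc _ _ _ H Hps).
  have Hhi : forall l : 'I_m, (is_ < l)%N -> R l j = R' l j.
    move=> l lt; apply/eqP; rewrite -subr_eq0 Hw; apply/eqP; apply: big1 => p _.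
    case: (boolP (c p == 0)) => [/eqP ->|cp]; first by rewrite mul0r.
    have lt' : (rowof p < l)%N.
      case: (boolP (p == ps)) => [/eqP ->//|nps]; exact: ltn_trans (Hlow p cp nps) lt.
    by rewrite ((Ha _ _ (Hpiv p cp).2).2 l lt') mulr0.
  have Hne : R is_ j - R' is_ j != 0.
    rewrite Hw (bigD1 ps) //= big1 ?addr0.
      by rewrite mulf_neq0 // (Ha _ _ Hps).1.
    move=> p nps; case: (boolP (c p == 0)) => [/eqP ->|cp]; first by rewrite mul0r.
    by rewrite ((Ha _ _ (Hpiv p cp).2).2 is_ (Hlow p cp nps)) mulr0.
  case: (boolP (b ps == 0)) => [/eqP bps|bps].
    have aps : a ps != 0 by move: cps; rewrite /c bps subr0.
    have [_ [i0 [Hi0 Hz]]] := Ha0 ps aps.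
    have ei : i0 = is_ by apply: (char_col_uniq HC Hi0 Hps).
    subst i0.
    apply: (side (R := R') (R' := R) (j := j) (p := ps) (i := is_) HC').
    - by rewrite -((IH ps psj).2 is_).
    - exact: psj.
    - by move: Hne; rewrite Hz // subr_eq0 eq_sym.
    - by move=> l lt; rewrite Hhi.
    - exact: Hz.
  have [_ [i0 [Hi0 Hz]]] := Hb0 ps bps.
  have ei : i0 = is_.
    apply: (char_col_uniq HC (p := ps)) => //; by rewrite ((IH ps psj).2 i0).
  subst i0.
  apply: (side (R := R) (R' := R') (j := j) (p := ps) (i := is_) HC) => //.
  by move: Hne; rewrite Hz // subr0.
move=> i; apply/eqP; rewrite -subr_eq0 Hw; apply/eqP; apply: big1 => p _.
by rewrite c0 mul0r.
Qed.

Lemma char_piv D R P R' P' (j : 'I_m) i :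
  Char D R P -> Char D R' P' -> (forall i, R i j = R' i j) -> (i,j) \in P -> (i,j) \in P'.
Proof.
case=> Ha Hb _ _ [Ha' Hb' _ _] E Hij.
have [n z] := Ha _ _ Hij.
have [l Hl] : exists l, (l,j) \in P'.
  case: (boolP [exists l, (l,j) \in P']) => [/existsP //|/existsPn H].
  by rewrite E (Hb' j H i) eqxx in n.
have [n' z'] := Ha' _ _ Hl.
case: (ltngtP i l) => [lt|lt|/val_inj -> //].
  by rewrite -E z ?eqxx in n'.
by rewrite E z' ?eqxx in n.
Qed.

Lemma char_uniq D R P R' P' : Char D R P -> Char D R' P' -> R = R' /\ P = P'.
Proof.
move=> HC HC'.
have H : forall n (j : 'I_m), (j < n)%N ->
    (forall i, R i j = R' i j) /\ (forall i, ((i,j) \in P) = ((i,j) \in P')).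
  elim=> [//|n IH] j; rewrite ltnS leq_eqVlt => /orP [/eqP e|]; last exact: IH.
  have E : forall i, R i j = R' i j.
    apply: (char_col HC HC') => p pj; apply: IH; by rewrite -e.
  split=> // i; apply/idP/idP; [exact: (char_piv HC HC')|].
  by apply: (char_piv HC' HC) => i'; rewrite E.
split; first by apply/matrixP => i j; exact: (H _ j (ltn_ord j)).1.
apply/setP => [[i j]]; exact: (H _ j (ltn_ord j)).2.
Qed.

Lemma inv_sim (M N : 'M[F]_m) : N *m N = 0 -> N *m M = 0 ->
  invmx (1%:M - N) *m M *m (1%:M - N) = M *m (1%:M - N).
Proof.
move=> NN NM.
have E : (1%:M - N) *m (1%:M + N) = 1%:M.
  rewrite mulmxBl mul1mx mulmxDr mulmx1 NN addr0.
  by rewrite addrK.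
have [U _] := mulmx1_unit E.
have -> : invmx (1%:M - N) = 1%:M + N.
  by have := mulKmx U (1%:M + N); rewrite E mulmx1.
by rewrite mulmxDl mul1mx NM addr0.
Qed.

Lemma prowP (P : {set pos m}) i : [exists k, (i,k) \in P] -> (i, prow P i) \in P.
Proof.
rewrite /prow; case: pickP => [k //|H] /existsP [k Hk].
by rewrite H in Hk.
Qed.

Lemma isaT_entry r (M : 'M[F]_m) (P : {set pos m}) a b :
  (M *m isa_T r M P) a b = M a b - \sum_(ij | isa_cob r M P ij)
     (M ij.1 ij.2 / M ij.1 (prow P ij.1)) * (M a (prow P ij.1) * (ij.2 == b)%:R).
Proof.
rewrite /isa_T mulmxBr mulmx1 !mxE; congr (_ - _).
under eq_bigr => k _ do rewrite summxE mulr_sumr.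
rewrite exchange_big /=; apply: eq_bigr => ij _.
rewrite (bigD1 (prow P ij.1)) //= big1 ?addr0 => [|k nk]; rewrite !mxE.
  by rewrite eqxx /= eq_sym mulrCA.
by rewrite (negPf nk) /= !mulr0.
Qed.

Lemma isaT_nocob r (M : 'M[F]_m) (P : {set pos m}) a b : (forall i, ~~ isa_cob r M P (i,b)) ->
  (M *m isa_T r M P) a b = M a b.
Proof.
move=> H; rewrite isaT_entry big1 ?subr0 // => [[i j]] /= Hc.
case: eqP => [e|_]; last by rewrite !mulr0.
by subst j; move: (H i); rewrite Hc.
Qed.

Lemma isaT_cob r (M : 'M[F]_m) (P : {set pos m}) a i b : isa_cob r M P (i,b) ->
  (M *m isa_T r M P) a b = M a b - (M i b / M i (prow P i)) * M a (prow P i).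
Proof.
move=> H; rewrite isaT_entry (bigD1 (i,b)) //= eqxx mulr1 big1 ?addr0 // => [[i' j]] /= /andP [Hc ne].
case: eqP => [e|_]; last by rewrite !mulr0.
subst j; exfalso; move: ne; apply/negP; rewrite negbK.
move: Hc H; rewrite /isa_cob /isa_markable /= => /andP [/and3P [/eqP e1 _ _] _] /andP [/and3P [/eqP e2 _ _] _].
apply/eqP; congr (_, _); apply: val_inj; apply/eqP; by rewrite -(eqn_add2r r) -e1 -e2.
Qed.

Section ISAsec.
Variables (D : 'M[F]_m) (J1 : {set 'I_m}).

Definition Supp (M : 'M[F]_m) := forall i j, M i j != 0 -> [&& (i < j)%N, i \notin J1 & j \in J1].

Definition Expand (M : 'M[F]_m) (P : {set pos m}) (j : 'I_m) :=
  exists a : 'I_m -> F,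
    (forall i, M i j = D i j + \sum_p a p * M i p) /\
    (forall p, a p != 0 -> (p < j)%N /\ exists i0, (i0,p) \in P /\
        forall i' : 'I_m, (i0 <= i')%N -> M i' j = 0).

Definition InvI (r : nat) (M : 'M[F]_m) (P : {set pos m}) :=
  [/\ Supp M,
      forall i j, (i,j) \in P -> [/\ (j < i + r)%N, M i j != 0 &
                                    forall i' : 'I_m, (i < i')%N -> M i' j = 0],
      forall i p j, (i,p) \in P -> (i,j) \in P -> p = j,
      forall j, (forall i, (i,j) \notin P) -> forall i : 'I_m, (j < i + r)%N -> M i j = 0 &
      forall j, Expand M P j].

Lemma mark_same_col r (M : 'M[F]_m) (P : {set pos m}) i i' (j : 'I_m) :
  isa_markable r M P (i,j) -> isa_markable r M P (i',j) -> i = i'.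
Proof.
rewrite /isa_markable /= => /and3P [/eqP e1 _ _] /and3P [/eqP e2 _ _].
by apply: val_inj; apply/eqP; rewrite -(eqn_add2r r) -e1 -e2.
Qed.

Lemma isa_step_eq r (M : 'M[F]_m) (P : {set pos m}) : Supp M ->
  isa_step (M, P) r = (M *m isa_T r M P, P :|: [set ij | isa_primary r M P ij]).
Proof.
move=> HS; rewrite /isa_step /isa_T; congr (_, _).
set N := \sum_(ij | _) _.
apply: inv_sim.
  rewrite /N mulmx_suml; apply: big1 => [[i j]] /= Hc.
  rewrite mulmx_sumr; apply: big1 => [[i' j']] /= Hc'.
  rewrite -scalemxAl -scalemxAr mul_delta_mx_0 ?scaler0 ?scale0r //.
  apply/eqP => e.
  move: Hc Hc'; rewrite /isa_cob /isa_markable /= => /andP [/and3P [_ _ nc] _] /andP [_ Hr].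
  have := prowP Hr; rewrite -e => Hin.
  by move/existsP: nc; apply; exists i'.
rewrite /N mulmx_suml; apply: big1 => [[i j]] /= Hc.
rewrite -scalemxAl.
have -> : delta_mx (prow P i) j *m M = 0.
  apply/matrixP => a b; rewrite !mxE; apply: big1 => k _; rewrite mxE.
  case: (boolP (k == j)) => [/eqP ->|nk]; last by rewrite andbF mul0r.
  have Mj : M j b = 0.
    apply/eqP; apply/negPn/negP => nz.
    move: Hc; rewrite /isa_cob /isa_markable /= => /andP [/and3P [_ nz' _] _].
    have := HS _ _ nz'; have := HS _ _ nz.
    by case/and3P => _ jn _ /and3P [_ _ ji]; rewrite ji in jn.
  by rewrite Mj mulr0.
by rewrite scaler0.
Qed.

Lemma InvI_step r (M : 'M[F]_m) (P : {set pos m}) : InvI r M P ->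
  InvI r.+1 (M *m isa_T r M P) (P :|: [set ij | isa_primary r M P ij]).
Proof.
case=> HS H1 H2 H3 H4.
set M' := M *m isa_T r M P.
set P' := P :|: _.
have inP' : forall i j, ((i,j) \in P') = ((i,j) \in P) || isa_primary r M P (i,j).
  by move=> i j; rewrite !inE.
have piv_sub : forall i j, (i,j) \in P -> (i,j) \in P'.
  by move=> i j H; rewrite inP' H.
have unch : forall b, (forall i, ~~ isa_cob r M P (i,b)) -> forall a, M' a b = M a b.
  by move=> b H a; apply: isaT_nocob.
have nocob_piv : forall b k, (k,b) \in P -> forall i, ~~ isa_cob r M P (i,b).
  move=> b k Hk i; rewrite /isa_cob /isa_markable /=; apply/negP => /andP [/and3P [_ _ /existsP []]].
  by exists k.
have cobinfo : forall i b, isa_cob r M P (i,b) ->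
    [/\ (nat_of_ord b = i + r)%N, M i b != 0, forall k, (k,b) \notin P & (i, prow P i) \in P].
  move=> i b; rewrite /isa_cob /isa_markable /= => /andP [/and3P [/eqP e nz /existsPn nc] Hr].
  by split=> //; apply: prowP.
have cobzero : forall i b, isa_cob r M P (i,b) -> forall i' : 'I_m, (i <= i')%N -> M' i' b = 0.
  move=> i b Hc i' le; rewrite /M' (isaT_cob _ Hc).
  have [eb nz nc Hp] := cobinfo _ _ Hc.
  have [_ nzp zp] := H1 _ _ Hp.
  move: le; rewrite leq_eqVlt => /orP [/eqP e|lt].
    have -> : i' = i by apply: val_inj.
    by rewrite divfK // subrr.
  rewrite (zp _ lt) mulr0 subr0; apply: H3 => //.
  by rewrite eb ltn_add2r.
split.
-
  move=> a b; case: (boolP [exists i, isa_cob r M P (i,b)]) => [/existsP [i Hc]| /existsPn Hn].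
    rewrite /M' (isaT_cob _ Hc) => nz.
    have [eb nzb nc Hp] := cobinfo _ _ Hc.
    case: (boolP (M a b == 0)) => [/eqP Mab|nzab]; last exact: HS.
    have Map : M a (prow P i) != 0.
      by apply: contraNneq nz => ->; rewrite Mab mulr0 subrr.
    have [lp _ _] := H1 _ _ Hp.
    case/and3P: (HS _ _ Map) => ap -> _; case/and3P: (HS _ _ nzb) => _ _ ->.
    by rewrite andbT (ltn_trans ap) // eb.
  by rewrite unch //; apply: HS.
-
  move=> i j; rewrite inP' => /orP [Hp|Hpr].
    have [lt nz z] := H1 _ _ Hp.
    rewrite !unch; [split=> //|exact: nocob_piv Hp..].
    - by rewrite addnS ltnS ltnW.
    - by move=> i' lt'; rewrite unch ?z //; exact: nocob_piv Hp.
  move: (Hpr); rewrite /isa_primary /isa_markable /= => /andP [/and3P [/eqP e nz /existsPn nc] nr].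
  have nocj : forall i', ~~ isa_cob r M P (i',j).
    move=> i'; apply/negP => Hc.
    have ei : i' = i.
      by apply: (@mark_same_col r M P _ _ j); [case/andP: Hc|case/andP: Hpr].
    subst i'; by case/andP: Hc => _; rewrite (negPf nr).
  split; first by rewrite e addnS.
    by rewrite unch.
  move=> i' lt; rewrite unch // H3 //.
  by rewrite e ltn_add2r.
-
  move=> i p j; rewrite !inP' => /orP [Hp|Hpp] /orP [Hj|Hjp].
  + exact: H2 Hp Hj.
  + by move: Hjp; rewrite /isa_primary => /andP [_ /existsP []]; exists p.
  + by move: Hpp; rewrite /isa_primary => /andP [_ /existsP []]; exists j.
  + move: Hpp Hjp; rewrite /isa_primary /isa_markable /= => /andP [/and3P [/eqP e1 _ _] _] /andP [/and3P [/eqP e2 _ _] _].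
    by apply: val_inj; rewrite /= e1 e2.
-
  move=> j Hn i lt.
  have HnP : forall i, (i,j) \notin P.
    by move=> i'; apply: contra (Hn i'); apply: piv_sub.
  have Hnpr : forall i, ~~ isa_primary r M P (i,j).
    by move=> i'; apply: contra (Hn i') => H; rewrite inP' H orbT.
  case: (boolP [exists i, isa_cob r M P (i,j)]) => [/existsP [i0 Hc]| /existsPn Hnc].
    apply: (cobzero _ _ Hc).
    have [e _ _ _] := cobinfo _ _ Hc.
    by move: lt; rewrite e addnS ltnS leq_add2r.
  rewrite unch //.
  case: (ltnP j (i + r)) => [lt'|ge]; first exact: H3.
  apply/eqP; apply/negPn/negP => nz.
  have mk : isa_markable r M P (i,j).
    rewrite /isa_markable /=; apply/and3P; split => //; last by apply/existsPn.
    by rewrite eqn_leq ge -ltnS -addnS lt.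
  case: (boolP [exists k, (i,k) \in P]) => Hr.
    by move: (Hnc i); rewrite /isa_cob mk Hr.
  by move: (Hnpr i); rewrite /isa_primary mk Hr.
-
  move=> j; have [a [Ea Ca]] := H4 j.
  have pivcol : forall p, a p != 0 -> exists k, (k,p) \in P.
    by move=> p ap; have [_ [i0 [Hi0 _]]] := Ca p ap; exists i0.
  case: (boolP [exists i, isa_cob r M P (i,j)]) => [/existsP [i0 Hc]| /existsPn Hnc]; last first.
    exists a; split.
      move=> i; rewrite unch // Ea; congr (_ + _); apply: eq_bigr => p _.
      case: (boolP (a p == 0)) => [/eqP ->|ap]; first by rewrite !mul0r.
      by have [k Hk] := pivcol p ap; rewrite unch //; apply: nocob_piv Hk.
    move=> p ap; have [pj [i1 [Hi1 Z]]] := Ca p ap; split=> //; exists i1; split.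
      exact: piv_sub.
    by move=> i' le; rewrite unch // Z.
  have [e nz nc Hp0] := cobinfo _ _ Hc.
  set p0 := prow P i0 in Hp0 *.
  set c := M i0 j / M i0 p0.
  exists (fun p => a p - (p == p0)%:R * c); split.
    move=> i; rewrite /M' (isaT_cob _ Hc) -/M' Ea -/p0 -/c -addrA; congr (_ + _).
    have -> : \sum_p (a p - (p == p0)%:R * c) * M' i p =
              \sum_p (a p * M i p - (p == p0)%:R * (c * M i p)).
      apply: eq_bigr => p _.
      case: (boolP [exists k, (k,p) \in P]) => [/existsP [k Hk]|/existsPn nk].
        by rewrite unch ?mulrBl ?mulrA //; apply: nocob_piv Hk.
      have ap : a p = 0.
        apply/eqP; apply/negPn/negP => ap; have [k Hk] := pivcol p ap.
        by move: (nk k); rewrite Hk.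
      have pp : (p == p0) = false.
        by apply/negP => /eqP ep; move: (nk i0); rewrite ep Hp0.
      by rewrite ap pp !mul0r subr0 mul0r.
    rewrite sumrB; congr (_ - _).
    rewrite (bigD1 p0) //= eqxx mul1r big1 ?addr0 // => p np.
    by rewrite (negPf np) mul0r.
  move=> p; case: (eqVneq p p0) => [->|ne].
    move=> _; have [lp _ _] := H1 _ _ Hp0; split; first by rewrite e.
    exists i0; split; first exact: piv_sub.
    exact: cobzero Hc.
  rewrite mul0r subr0 => ap.
  have [pj [i1 [Hi1 Z]]] := Ca p ap; split=> //; exists i1; split.
    exact: piv_sub.
  move=> i' le; apply: (cobzero _ _ Hc).
  have : (i0 < i1)%N.
    rewrite ltnNge; apply/negP => le'; by rewrite Z ?eqxx in nz.
  by move/ltnW/leq_trans; apply.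
Qed.

Lemma InvI_init : Supp D -> InvI 1 D set0.
Proof.
move=> HS; split=> //.
- by move=> i j; rewrite inE.
- by move=> i p j; rewrite inE.
- move=> j _ i lt; apply/eqP; apply/negPn/negP => nz.
  move: lt; rewrite addn1 ltnS => le; case/and3P: (HS _ _ nz) => ij _ _.
  by rewrite ltnNge le in ij.
- move=> j; exists (fun _ => 0); split.
    by move=> i; rewrite big1 ?addr0 // => p _; rewrite mul0r.
  by move=> p; rewrite eqxx.
Qed.

Lemma InvI_fold n r (M : 'M[F]_m) (P : {set pos m}) : InvI r M P ->
  InvI (r + n) (foldl (@isa_step F m) (M,P) (iota r n)).1 (foldl (@isa_step F m) (M,P) (iota r n)).2.
Proof.
elim: n r M P => [|n IH] r M P H; first by rewrite addn0.
have E := isa_step_eq r P (let: And5 h _ _ _ _ := H in h); simpl in E.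
rewrite /= E -addSnnS.
exact: IH (InvI_step H).
Qed.

Lemma InvI_final r (M : 'M[F]_m) (P : {set pos m}) : (m <= r)%N -> InvI r M P -> Char D M P.
Proof.
move=> mr [HS H1 H2 H3 H4]; split=> //.
- by move=> i j Hp; have [_ ? ?] := H1 _ _ Hp.
- move=> j Hn i; apply: H3 => //.
  by apply: leq_trans (ltn_ord j) _; apply: leq_trans mr _; apply: leq_addl.
Qed.

Lemma ISA_char : Supp D -> Char D (ISA D).1 (ISA D).2.
Proof.
move=> HS; apply: (@InvI_final (1 + m.-1)).
  by case: m.
exact: InvI_fold (InvI_init HS).
Qed.


Definition InvR (M : 'M[F]_m) (C : {set 'I_m}) (P : {set pos m}) :=
  [/\ Supp M,
      forall i j, (i,j) \in P -> [/\ j \notin C, M i j != 0 &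
                                    forall i' : 'I_m, (i < i')%N -> M i' j = 0],
      forall i p j, (i,p) \in P -> (i,j) \in P -> p = j,
      (forall j, j \notin C -> exists i, (i,j) \in P) /\
      (forall j i p, j \in C -> (i,p) \in P -> forall i' : 'I_m, (i <= i')%N -> M i' j = 0) &
      forall j, Expand M P j].

Definition Stopped (M : 'M[F]_m) (C : {set 'I_m}) := forall i j, j \in C -> M i j = 0.

Lemma revT_entry (M : 'M[F]_m) (C : {set 'I_m}) (it jt a b : 'I_m) :
  (M *m (1%:M - \sum_(j in C | (jt < j)%N) (M it j / M it jt) *: delta_mx jt j)) a b =
  M a b - (if (b \in C) && (jt < b)%N then M it b / M it jt else 0) * M a jt.
Proof.
rewrite mulmxBr mulmx1 !mxE; congr (_ - _).
under eq_bigr => k _ do rewrite summxE mulr_sumr.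
rewrite exchange_big /=.
under eq_bigr => j _.
  rewrite (bigD1 jt) //= big1 ?addr0 => [|k nk]; last by rewrite !mxE (negPf nk) /= !mulr0.
  rewrite !mxE eqxx /=.
  over.
case: ifP => Hb.
  rewrite (bigD1 b) //= eqxx mulr1 big1 ?addr0; first by rewrite mulrC.
  by move=> j /andP [_ nb]; rewrite eq_sym (negPf nb) !mulr0.
rewrite big1 ?mul0r // => j Hj; case: (eqVneq b j) => [e|]; last by rewrite !mulr0.
by subst j; rewrite Hj in Hb.
Qed.


Lemma InvR_step (M : 'M[F]_m) (C : {set 'I_m}) (P : {set pos m}) :
  InvR M C P ->
  InvR (rev_step (M, C, P)).1.1 (rev_step (M, C, P)).1.2 (rev_step (M, C, P)).2 /\
  ((rev_step (M, C, P) = (M, C, P) /\ Stopped M C) \/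
   (~ Stopped M C /\ (#|(rev_step (M, C, P)).1.2| < #|C|)%N)).
Proof.
move=> HI; case: (HI) => HS H1 H2 [H3 H4] H5.
rewrite /rev_step; case: pickP => [it Hit|Hn]; last first.
  have St : Stopped M C.
    move=> i j jC; apply/eqP; apply/negPn/negP => nz.
    have rc : rowC M C i by apply/existsP; exists j; rewrite jC.
    case: (@fintype.arg_maxnP _ i (fun i => rowC M C i) (fun i => nat_of_ord i) rc) => is_ ris Hmax.
    move: (Hn is_); rewrite ris /=; move/negP; apply; apply/forallP => i'.
    by apply/implyP => ri'; apply: Hmax.
  by split=> //; left.
case: pickP => [jt Hjt|Hn2]; last first.
  exfalso; case/andP: Hit => /existsP [j0 /andP [j0C nz0]] _.
  have pj0 : (j0 \in C) && (M it j0 != 0) by rewrite j0C.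
  case: (@fintype.arg_minnP _ j0 (fun j => (j \in C) && (M it j != 0)) (fun j => nat_of_ord j) pj0) => js /andP [jsC nzs] Hmin.
  move: (Hn2 js); rewrite jsC nzs /=; move/negP; apply; apply/forallP => j'.
  by apply/implyP => Hj'; apply: Hmin.
case/andP: Hit => rit /forallP Hmaxr.
case/and3P: Hjt => jtC nzjt /forallP Hminc.
have Habove : forall j (i' : 'I_m), j \in C -> (it < i')%N -> M i' j = 0.
  move=> j i' jC lt; apply/eqP; apply/negPn/negP => nz.
  have := implyP (Hmaxr i'); rewrite (_ : rowC M C i' = true); last first.
    by apply/existsP; exists j; rewrite jC.
  by move=> /(_ isT); rewrite leqNgt lt.
have Hmin : forall j', j' \in C -> M it j' != 0 -> (jt <= j')%N.
  by move=> j' jC nz; apply: (implyP (Hminc j')); rewrite jC.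
set T := 1%:M - _.
set M' := M *m T.
set cb := fun b : 'I_m => if (b \in C) && (jt < b)%N then M it b / M it jt else 0.
have ME : forall a b, M' a b = M a b - cb b * M a jt by move=> a b; apply: revT_entry.
have unchC : forall b, ~~ ((b \in C) && (jt < b)%N) -> forall a, M' a b = M a b.
  by move=> b nb a; rewrite ME /cb (negPf nb) mul0r subr0.
have unchP : forall i p, (i,p) \in P -> forall a, M' a p = M a p.
  move=> i p Hp; apply: unchC; have [pC _ _] := H1 _ _ Hp; by rewrite (negPf pC).
have unchjt : forall a, M' a jt = M a jt by apply: unchC; rewrite ltnn andbF.
have zeroC' : forall j, j \in C -> j != jt -> forall i' : 'I_m, (it <= i')%N -> M' i' j = 0.
  move=> j jC njt i' le; rewrite ME /cb jC /=.
  move: le; rewrite leq_eqVlt => /orP [/eqP e|lt].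
    have -> : i' = it by apply: val_inj.
    case: ifP => ltj; first by rewrite divfK // subrr.
    rewrite mul0r subr0; apply/eqP; apply/negPn/negP => nz.
    have := Hmin j jC nz; rewrite leq_eqVlt ltj orbF => /eqP e'.
    by move: njt; rewrite (_ : j = jt) ?eqxx //; apply: val_inj.
  by rewrite (Habove j i') // (Habove jt i') // mulr0 subr0.
have inP' : forall i j, ((i,j) \in P :|: [set (it, jt)]) = ((i,j) \in P) || ((i == it) && (j == jt)).
  by move=> i j; rewrite !inE xpair_eqE.
split; last first.
  right; split.
    by move=> St; move: nzjt; rewrite St ?eqxx.
  by rewrite /= (cardsD1 jt C) jtC.
split.
-
  move=> a b; rewrite ME => nz.
  case: (boolP (M a b == 0)) => [/eqP Mab|nzab]; last exact: HS.
  have cbnz : cb b != 0 by apply: contraNneq nz => ->; rewrite mul0r Mab subr0.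
  have nzajt : M a jt != 0 by apply: contraNneq nz => ->; rewrite mulr0 Mab subr0.
  move: cbnz; rewrite /cb; case: ifP => [/andP [bC ltb]|]; last by rewrite eqxx.
  move=> cnz.
  have nzb : M it b != 0 by apply: contraNneq cnz => ->; rewrite mul0r.
  case/and3P: (HS _ _ nzajt) => ajt -> _; case/and3P: (HS _ _ nzb) => _ _ ->.
  by rewrite andbT (ltn_trans ajt ltb).
-
  move=> i j; rewrite inP' => /orP [Hp|/andP [/eqP -> /eqP ->]].
    have [jC nz z] := H1 _ _ Hp.
    split; first by rewrite /= in_setD1 (negPf jC) andbF.
      by rewrite (unchP _ _ Hp).
    by move=> i' lt; rewrite (unchP _ _ Hp) z.
  split; first by rewrite /= in_setD1 eqxx.
    by rewrite unchjt.
  by move=> i' lt; rewrite unchjt (Habove jt).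
-
  move=> i p j; rewrite !inP' => /orP [Hp|/andP [/eqP ei /eqP ep]] /orP [Hj|/andP [/eqP ei' /eqP ej]].
  + exact: H2 Hp Hj.
  + subst i j; exfalso; by move: nzjt; rewrite (H4 jt it p jtC Hp it (leqnn _)) eqxx.
  + subst i p; exfalso; by move: nzjt; rewrite (H4 jt it j jtC Hj it (leqnn _)) eqxx.
  + by rewrite ep ej.
- split.
    move=> j; rewrite /= in_setD1 negb_and negbK => /orP [/eqP ->|jC].
      by exists it; rewrite inP' !eqxx orbT.
    by have [i Hi] := H3 j jC; exists i; rewrite inP' Hi.
  move=> j i p; rewrite /= in_setD1 => /andP [njt jC]; rewrite inP' => /orP [Hp|/andP [/eqP -> _]].
    move=> i' le; rewrite ME (H4 j i p jC Hp i' le) (H4 jt i p jtC Hp i' le).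
    by rewrite mulr0 subr0.
  exact: zeroC'.
-
  move=> j; have [a [Ea Ca]] := H5 j.
  have pivcol : forall p, a p != 0 -> exists k, (k,p) \in P.
    by move=> p ap; have [_ [i0 [Hi0 _]]] := Ca p ap; exists i0.
  case: (boolP ((j \in C) && (jt < j)%N)) => Hj; last first.
    exists a; split.
      move=> i; rewrite unchC // Ea; congr (_ + _); apply: eq_bigr => p _.
      case: (boolP (a p == 0)) => [/eqP ->|ap]; first by rewrite !mul0r.
      by have [k Hk] := pivcol p ap; rewrite (unchP _ _ Hk).
    move=> p ap; have [pj [i1 [Hi1 Z]]] := Ca p ap; split=> //; exists i1; split.
      by rewrite inP' Hi1.
    by move=> i' le; rewrite unchC // Z.
  case/andP: (Hj) => jC ltj.
  have njt : j != jt by apply: contraTneq ltj => ->; rewrite ltnn.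
  set c := M it j / M it jt.
  have cbj : cb j = c by rewrite /cb Hj.
  exists (fun p => a p - (p == jt)%:R * c); split.
    move=> i; rewrite ME cbj Ea -addrA; congr (_ + _).
    have -> : \sum_p (a p - (p == jt)%:R * c) * M' i p =
              \sum_p (a p * M i p - (p == jt)%:R * (c * M i p)).
      apply: eq_bigr => p _.
      case: (eqVneq p jt) => [->|npjt].
        by rewrite unchjt mulrBl mulrA /= mulr1n mul1r.
      rewrite mul0r subr0 mul0r subr0.
      case: (boolP (a p == 0)) => [/eqP ->|ap]; first by rewrite !mul0r.
      by have [k Hk] := pivcol p ap; rewrite (unchP _ _ Hk).
    rewrite sumrB; congr (_ - _).
    rewrite (bigD1 jt) //= eqxx mul1r big1 ?addr0 // => p np.
    by rewrite (negPf np) mul0r.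
  move=> p; case: (eqVneq p jt) => [->|ne].
    move=> _; split=> //; exists it; split; first by rewrite inP' !eqxx orbT.
    exact: zeroC'.
  rewrite mul0r subr0 => ap.
  have [pj [i1 [Hi1 Z]]] := Ca p ap; split=> //; exists i1; split.
    by rewrite inP' Hi1.
  move=> i' le; rewrite ME (Z i' le) (H4 jt i1 p jtC Hi1 i' le).
  by rewrite mulr0 subr0.
Qed.


Lemma InvR_iter n (M : 'M[F]_m) (C : {set 'I_m}) (P : {set pos m}) : InvR M C P ->
  InvR (iter n (@rev_step F m) (M,C,P)).1.1 (iter n (@rev_step F m) (M,C,P)).1.2
       (iter n (@rev_step F m) (M,C,P)).2 /\
  (Stopped (iter n (@rev_step F m) (M,C,P)).1.1 (iter n (@rev_step F m) (M,C,P)).1.2 \/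
   (#|(iter n (@rev_step F m) (M,C,P)).1.2| + n <= #|C|)%N).
Proof.
move=> H0; elim: n => [|n [IH1 IH2]]; first by split=> //; right; rewrite addn0.
rewrite iterS; move: IH1 IH2; case: (iter n _ _) => [[M1 C1] P1] I1 I2.
have [I1' [[E St]|[nSt lt]]] := InvR_step I1.
  by rewrite E; split=> //; left.
split=> //; case: I2 => [//|le]; right.
by rewrite addnS; apply: leq_trans le; rewrite ltn_add2r.
Qed.

Lemma InvR_char (M : 'M[F]_m) (C : {set 'I_m}) (P : {set pos m}) :
  InvR M C P -> Stopped M C -> Char D M P.
Proof.
move=> [HS H1 H2 [H3 H4] H5] St; split=> //.
- by move=> i j Hp; have [_ ? ?] := H1 _ _ Hp.
- move=> j Hn i; apply: St; apply/negPn/negP => nC.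
  have [i0 Hi0] := H3 j nC; by move: (Hn i0); rewrite Hi0.
Qed.

Lemma Rev_char : Supp D -> Char D (Revised1 D).1.1 (Revised1 D).2.
Proof.
move=> HS.
have I0 : InvR D setT set0.
  split=> //.
  - by move=> i j; rewrite inE.
  - by move=> i p j; rewrite inE.
  - split; first by move=> j; rewrite inE.
    by move=> j i p _; rewrite inE.
  - move=> j; exists (fun _ => 0); split.
      by move=> i; rewrite big1 ?addr0 // => p _; rewrite mul0r.
    by move=> p; rewrite eqxx.
have [I St] := InvR_iter m I0.
apply: (InvR_char I); case: St => [//|le].
move: le; rewrite cardsT card_ord -[X in (_ <= X)%N](add0n m) leq_add2r leqn0 cards_eq0 => /eqP ->.
by move=> i j; rewrite inE.
Qed.

End ISAsec.

Lemma main_aux (D : 'M[F]_m) (J0 J1 : {set 'I_m}) :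
  connection_matrix1 D J0 J1 ->
  (Revised1 D).1.1 = (ISA D).1 /\ (Revised1 D).2 = (ISA D).2.
Proof.
move=> [[Hdisj _] [_ [_ Hsupp]]].
have HS : Supp J1 D.
  move=> i j nz; case/and3P: (Hsupp i j nz) => -> iJ0 ->; rewrite andbT /=.
  apply/negP => iJ1; have : i \in J0 :&: J1 by rewrite inE iJ0 iJ1.
  by rewrite Hdisj inE.
exact: char_uniq (Rev_char HS) (ISA_char HS).
Qed.
End Proofs.

Theorem mainTheorem8 (F : fieldType) (m : nat) (D : 'M[F]_m)
    (J0 J1 : {set 'I_m}) :
  connection_matrix1 D J0 J1 ->
  (Revised1 D).1.1 = (ISA D).1 /\ (Revised1 D).2 = (ISA D).2.
Proof. exact: main_aux. Qed.
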